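(* In $NOM$, writing $\phi\vee\psi$ for $\neg(\neg\phi\wedge\neg\psi)$ and $\phi\perp\!\!\!\perp\psi$ for $(\phi\rightarrow(\psi\rightarrow\phi))\wedge(\psi\rightarrow(\phi\rightarrow\psi))$, the following rules are derivable for every finite sequence $\Gamma$ and formulas $\phi,\psi$: from $\Gamma\vdash\phi\perp\!\!\!\perp\psi$ infer $\Gamma,\phi\vdash(\phi\wedge\psi)\vee(\phi\wedge\neg\psi)$; and from $\Gamma\vdash\phi\perp\!\!\!\perp\psi$ infer $\Gamma\vdash((\phi\wedge\psi)\vee(\phi\wedge\neg\psi))\vee((\neg\phi\wedge\psi)\vee(\neg\phi\wedge\neg\psi))$.
   Context: The propositional deductive system $NOM$: formulas are built from propositional letters using $\wedge$, $\rightarrow$, $\neg$. Sequents are $\phi_1,\ldots,\phi_n\vdash\psi$ ($n\ge0$) with antecedent a finite ordered sequence. With $\Gamma$ a finite possibly empty sequence of formulas and $\phi,\psi,\chi$ formulas, the rules of $NOM$ are: (assumption) $\Gamma,\phi\vdash\phi$; (cut) $\Gamma\vdash\phi$, $\Gamma,\phi\vdash\psi$ $\Rightarrow$ $\Gamma\vdash\psi$; (paste) $\Gamma\vdash\phi$, $\Gamma\vdash\psi$ $\Rightarrow$ $\Gamma,\phi\vdash\psi$; (compatible exchange) $\Gamma,\phi,\psi\vdash\phi$, $\Gamma,\phi,\psi\vdash\chi$, $\Gamma,\psi,\phi\vdash\psi$ $\Rightarrow$ $\Gamma,\psi,\phi\vdash\chi$; ($\wedge$-intro) $\Gamma\vdash\phi$,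 $\Gamma\vdash\psi$ $\Rightarrow$ $\Gamma\vdash\phi\wedge\psi$; ($\wedge$-elim) $\Gamma\vdash\phi\wedge\psi$ $\Rightarrow$ $\Gamma\vdash\phi$ and $\Rightarrow$ $\Gamma\vdash\psi$; ($\rightarrow$-intro) $\Gamma,\phi\vdash\psi$ $\Rightarrow$ $\Gamma\vdash\phi\rightarrow\psi$; ($\rightarrow$-elim) $\Gamma\vdash\phi\rightarrow\psi$ $\Rightarrow$ $\Gamma,\phi\vdash\psi$; (excluded middle) $\Gamma,\phi\vdash\psi$, $\Gamma,\neg\phi\vdash\psi$ $\Rightarrow$ $\Gamma\vdash\psi$; (explosion) $\Gamma\vdash\neg\phi$ $\Rightarrow$ $\Gamma,\phi\vdash\psi$. A rule schema is derivable if in every instance its conclusion can be derived from its premises using these rules. *)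

(* Defs.v *)
From Stdlib Require Import List.
Import ListNotations.

Inductive formula : Type :=
| Var : nat -> formula
| And : formula -> formula -> formula
| Imp : formula -> formula -> formula
| Neg : formula -> formula.

Definition Or (p q : formula) : formula := Neg (And (Neg p) (Neg q)).
Definition Indep (p q : formula) : formula :=
  And (Imp p (Imp q p)) (Imp q (Imp p q)).

(* A sequent Gamma |- psi; the antecedent is a list, and "Gamma, phi" is
   Gamma ++ [phi] (phi appended at the right end). *)

(* [NOM Hyp G s]: the sequent G |- s is derivable in NOM from the extra
   premise sequents collected in Hyp (used to express derivability of rules). *)
Inductive NOM (Hyp : list formula -> formula -> Prop) : list formula -> formula -> Prop :=
| n_prem : forall G s, Hyp G s -> NOM Hyp G s
| n_assum : forall G p, NOM Hyp (G ++ [p]) p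
| n_cut : forall G p q, NOM Hyp G p -> NOM Hyp (G ++ [p]) q -> NOM Hyp G q
| n_paste : forall G p q, NOM Hyp G p -> NOM Hyp G q -> NOM Hyp (G ++ [p]) q
| n_cexch : forall G p q r,
    NOM Hyp (G ++ [p; q]) p -> NOM Hyp (G ++ [p; q]) r -> NOM Hyp (G ++ [q; p]) q ->
    NOM Hyp (G ++ [q; p]) r
| n_andI : forall G p q, NOM Hyp G p -> NOM Hyp G q -> NOM Hyp G (And p q)
| n_andE1 : forall G p q, NOM Hyp G (And p q) -> NOM Hyp G p
| n_andE2 : forall G p q, NOM Hyp G (And p q) -> NOM Hyp G q
| n_impI : forall G p q, NOM Hyp (G ++ [p]) q -> NOM Hyp G (Imp p q)
| n_impE : forall G p q, NOM Hyp G (Imp p q) -> NOM Hyp (G ++ [p]) q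
| n_em : forall G p q, NOM Hyp (G ++ [p]) q -> NOM Hyp (G ++ [Neg p]) q -> NOM Hyp G q
| n_expl : forall G p q, NOM Hyp G (Neg p) -> NOM Hyp (G ++ [p]) q.

Definition derivable_rule (G1 : list formula) (s1 : formula)
  (G2 : list formula) (s2 : formula) : Prop :=
  NOM (fun G s => G = G1 /\ s = s1) G2 s2.

(* Main.v *)
Require Import Defs.
From Stdlib Require Import List.
Import ListNotations.

Lemma cex (H : list formula -> formula -> Prop) G p q r :
  NOM H ((G ++ [p]) ++ [q]) p -> NOM H ((G ++ [p]) ++ [q]) r ->
  NOM H ((G ++ [q]) ++ [p]) q -> NOM H ((G ++ [q]) ++ [p]) r.
Proof.
  rewrite <- !app_assoc; simpl. intros; eapply n_cexch; eauto.
Qed.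

Lemma dne H G A : NOM H G (Neg (Neg A)) -> NOM H G A.
Proof.
  intro h. apply n_em with A. apply n_assum. apply n_expl. exact h.
Qed.

Lemma dni_imp H G A : NOM H G (Imp A (Neg (Neg A))).
Proof.
  apply n_em with (Neg A).
  - apply n_impI. apply n_expl. apply n_assum.
  - apply n_impI. apply n_paste. apply dne. apply n_assum. apply n_assum.
Qed.

Lemma dni H G A : NOM H G A -> NOM H G (Neg (Neg A)).
Proof.
  intro h. apply n_cut with A; [exact h|]. apply n_impE. apply dni_imp.
Qed.

Lemma contra H G A r : NOM H G A -> NOM H G (Neg A) -> NOM H G r.
Proof.
  intros h1 h2. apply n_cut with A; [exact h1|]. apply n_expl. exact h2.
Qed.

Lemma expl2 H G X Y r : NOM H G (Neg X) -> NOM H ((G ++ [X]) ++ [Y]) r.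
Proof.
  intro h. apply n_expl. apply n_expl. exact h.
Qed.

Lemma T1 H G X C r : NOM H G (Neg X) -> NOM H (G ++ [C]) X -> NOM H (G ++ [C]) r.
Proof.
  intros h1 h2. apply n_cut with X; [exact h2|].
  apply cex.
  - apply expl2; exact h1.
  - apply expl2; exact h1.
  - apply n_paste; [exact h2| apply n_assum].
Qed.

Lemma negI H G C : NOM H (G ++ [C]) (Neg C) -> NOM H G (Neg C).
Proof. intro h. apply n_em with C; [exact h| apply n_assum]. Qed.

Lemma CP H G X C : NOM H G (Neg X) -> NOM H (G ++ [C]) X -> NOM H G (Neg C).
Proof. intros h1 h2. apply negI. eapply T1; eauto. Qed.

Lemma OrL H G A B : NOM H G A -> NOM H G (Or A B).
Proof.
  intro h. unfold Or. apply CP with (Neg A).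
  - apply dni; exact h.
  - eapply n_andE1. apply n_assum.
Qed.

Lemma OrR H G A B : NOM H G B -> NOM H G (Or A B).
Proof.
  intro h. unfold Or. apply CP with (Neg B).
  - apply dni; exact h.
  - eapply n_andE2. apply n_assum.
Qed.

Lemma transfer H G a x y : NOM H G a -> NOM H ((G ++ [a]) ++ [x]) y -> NOM H (G ++ [x]) y.
Proof.
  intros h1 h2. apply n_impE. apply n_cut with a; [exact h1|]. apply n_impI. exact h2.
Qed.

Lemma LW H G X W : (forall D, NOM H (D ++ [W]) X) -> NOM H ((G ++ [X]) ++ [Neg W]) X.
Proof.
  intro hw. apply n_em with (Neg X).
  - apply cex.
    + apply n_expl. apply n_expl. apply dni. apply n_assum.
    + apply n_expl. apply n_expl. apply dni. apply n_assum.
    + apply CP with X. apply n_assum. apply hw.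
  - apply dne. apply n_assum.
Qed.

Lemma LW' H G W V : (forall D, NOM H (D ++ [W]) V) -> NOM H ((G ++ [Neg W]) ++ [V]) (Neg W).
Proof.
  intro hw. apply n_em with W.
  - apply cex.
    + apply expl2. apply n_assum.
    + apply expl2. apply n_assum.
    + apply hw.
  - apply n_assum.
Qed.

Lemma RE H G q y : NOM H G y -> NOM H (G ++ [q]) y -> NOM H (G ++ [Neg q]) y.
Proof.
  intros h1 h2.
  set (a := And q y). set (K := And (Neg (Neg q)) (Neg a)).
  assert (s1 : NOM H G (Neg K)).
  { apply negI. 
    assert (kq : NOM H (G ++ [K]) q).
    { apply dne. eapply n_andE1. apply n_assum. }
    apply n_cut with q; [exact kq|].
    apply cex.
    - apply dne. eapply n_andE1. apply n_assum.
    - apply T1 with (Neg a).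
      + apply dni. apply n_andI; [apply n_assum| exact h2].
      + eapply n_andE2. apply n_assum.
    - apply n_paste; [exact kq| apply n_assum]. }
  assert (s2 : NOM H (G ++ [Neg a]) (Neg K)).
  { apply transfer with (Neg K); [exact s1|]. apply LW.
    intro D. unfold K. change (Neg (And (Neg (Neg q)) (Neg a))) with (Or (Neg q) a).
    apply OrR. apply n_assum. }
  assert (s3 : NOM H ((G ++ [Neg a]) ++ [q]) K).
  { apply n_andI. apply dni. apply n_assum.
    apply LW'. intro D. eapply n_andE1. apply n_assum. }
  assert (s4 : NOM H (G ++ [Neg a]) (Neg q)).
  { apply CP with K; [exact s2| exact s3]. }
  assert (s5 : NOM H (G ++ [Neg a]) y).
  { apply transfer with y; [exact h1|]. apply LW. intro D. eapply n_andE2. apply n_assum. }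
  assert (s6 : NOM H (G ++ [Neg q]) (Neg a)).
  { apply CP with q. apply n_assum. eapply n_andE1. apply n_assum. }
  apply n_cut with (Neg a); [exact s6|].
  apply cex.
  - apply n_paste; [exact s4| apply n_assum].
  - apply n_paste; [exact s4| exact s5].
  - apply n_paste; [exact s6| apply n_assum].
Qed.

Theorem proposition4p11 : forall (G : list formula) (p q : formula),
  derivable_rule G (Indep p q)
    (G ++ [p]) (Or (And p q) (And p (Neg q)))
  /\
  derivable_rule G (Indep p q)
    G (Or (Or (And p q) (And p (Neg q)))
          (Or (And (Neg p) q) (And (Neg p) (Neg q)))).
Proof.
  intros G p q. unfold derivable_rule.
  set (H := fun G0 s => G0 = G /\ s = Indep p q).
  assert (prem : NOM H G (Indep p q)) by (apply n_prem; split; reflexivity).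
  assert (A1 : NOM H ((G ++ [p]) ++ [q]) p).
  { apply n_impE. apply n_impE. eapply n_andE1. exact prem. }
  assert (A2 : NOM H ((G ++ [q]) ++ [p]) q).
  { apply n_impE. apply n_impE. eapply n_andE2. exact prem. }
  assert (S : NOM H ((G ++ [p]) ++ [Neg q]) p).
  { apply RE; [apply n_assum| exact A1]. }
  assert (T1g : NOM H (G ++ [p]) (Or (And p q) (And p (Neg q)))).
  { apply n_em with q.
    - apply OrL. apply n_andI; [exact A1| apply n_assum].
    - apply OrR. apply n_andI; [exact S| apply n_assum]. }
  split; [exact T1g|].
  set (a := And p q).
  assert (U : NOM H ((G ++ [Neg p]) ++ [q]) (Neg p)).
  { assert (r1 : NOM H (G ++ [Neg p]) (Imp q (Imp p a))).
    { apply RE.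
      - apply n_impI. apply n_impI. apply n_andI; [apply n_assum| exact A2].
      - apply n_impI. apply n_impI. apply n_paste; [exact A1|].
        apply n_andI; [exact A1| apply n_assum]. }
    assert (r2 : NOM H (((G ++ [Neg p]) ++ [q]) ++ [p]) a).
    { apply n_impE. apply n_impE. exact r1. }
    assert (na : NOM H (G ++ [Neg p]) (Neg a)).
    { apply CP with p. apply n_assum. eapply n_andE1. apply n_assum. }
    assert (na2 : NOM H ((G ++ [Neg p]) ++ [q]) (Neg a)).
    { apply transfer with (Neg a); [exact na|]. apply LW'. intro D. eapply n_andE2. apply n_assum. }
    assert (na3 : NOM H (((G ++ [Neg p]) ++ [q]) ++ [p]) (Neg a)).
    { apply transfer with (Neg a); [exact na2|]. apply LW'. intro D. eapply n_andE1. apply n_assum. }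
    apply n_em with p.
    - eapply contra; [exact r2| exact na3].
    - apply n_assum. }
  assert (T : NOM H ((G ++ [Neg p]) ++ [Neg q]) (Neg p)).
  { apply RE; [apply n_assum| exact U]. }
  apply n_em with p.
  - apply OrL. exact T1g.
  - apply OrR. apply n_em with q.
    + apply OrL. apply n_andI; [exact U| apply n_assum].
    + apply OrR. apply n_andI; [exact T| apply n_assum].
Qed.
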